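(* Let $\mathcal F\subset\mathcal G\subset 2^{[n]}$, where $\mathcal G$ is a down-set and $\mathcal F$ is intersecting. If $\tau(\mathcal F)\le 2$, then $$|\mathcal F|\le \max_{x\in[n]}\big|\{G\in\mathcal G: x\in G\}\big|.$$
   Context: $[n]=\{1,\dots,n\}$. A family $\mathcal G\subset 2^{[n]}$ is a down-set if $B\in\mathcal G$ and $A\subset B$ imply $A\in\mathcal G$. A family $\mathcal F$ is intersecting if $A\cap B\ne\emptyset$ for all $A,B\in\mathcal F$. For a family $\mathcal F$ of non-empty sets, the covering number $\tau(\mathcal F)$ is the minimal integer $t$ such that there is a $t$-element set $T$ with $T\cap F\neq\emptyset$ for all $F\in\mathcal F$. *)

(* Defs.v *)
From mathcomp Require Import all_boot.
Set Implicit Arguments. Unset Strict Implicit. Unset Printing Implicit Defensive.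

(* Ground set [n] is represented by 'I_n (elements 0..n-1). *)
Definition down_set n (G : {set {set 'I_n}}) : Prop :=
  forall A B : {set 'I_n}, B \in G -> A \subset B -> A \in G.

Definition intersecting n (F : {set {set 'I_n}}) : Prop :=
  forall A B, A \in F -> B \in F -> A :&: B != set0.

Definition covers n (T : {set 'I_n}) (F : {set {set 'I_n}}) : bool :=
  [forall A in F, T :&: A != set0].

(* covering number: least size of a set meeting every member of F
   (the default value n is only reached when no cover exists, i.e. set0 \in F). *)
Definition tau n (F : {set {set 'I_n}}) : nat :=
  \big[minn/n]_(T : {set 'I_n} | covers T F) #|T|.

Definition degree n (G : {set {set 'I_n}}) (x : 'I_n) : nat :=
  #|[set B in G | x \in B]|.

(* Main.v *)
Require Import Defs.
From mathcomp Require Import all_boot zify.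
Set Implicit Arguments. Unset Strict Implicit. Unset Printing Implicit Defensive.

Lemma four (a0 a1 b0 b1 g0 g1 d0 d1 : nat) :
  a0*b0 <= g0*d0 -> a0*b1 <= g1*d0 -> a1*b0 <= g1*d0 -> a1*b1 <= g1*d1 ->
  (a0+a1)*(b0+b1) <= (g0+g1)*(d0+d1).
Proof.
move=> h1 h2 h3 h4.
have [K0|Kp] := posnP (g1*d0).
  have e2 : a0 * b1 = 0 by lia.
  have e3 : a1 * b0 = 0 by lia.
  nia.
set K := g1 * d0 in Kp h2 h3 *.
have [r hr] : exists r, K = a0*b1 + r by exists (K - a0*b1); lia.
have [s hs] : exists s, K = a1*b0 + s by exists (K - a1*b0); lia.
have E : (a0*b0 + K)*(K + a1*b1) = K*((a0+a1)*(b0+b1)) + r*s.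
  have : (a0*b0)*(a1*b1) = (a0*b1)*(a1*b0) by lia.
  nia.
have E2 : (g0*d0 + K)*(K + g1*d1) = K*((g0+g1)*(d0+d1)) by rewrite /K; lia.
rewrite -(leq_pmul2l Kp) -E2.
apply: leq_trans (_ : (a0*b0 + K)*(K + a1*b1) <= _).
  by rewrite E leq_addr.
by apply: leq_mul; rewrite ?leq_add2r ?leq_add2l.
Qed.

Section AD.
Variable T : finType.
Definition J (X Y : {set {set T}}) := [set a :|: b | a in X, b in Y].
Definition M (X Y : {set {set T}}) := [set a :&: b | a in X, b in Y].
Definition agree (U : {set T}) (X : {set {set T}}) :=
  forall a a', a \in X -> a' \in X -> a :\: U = a' :\: U.

Lemma card_split (X : {set {set T}}) (z : T) :
  #|X| = #|[set a in X | z \notin a]| + #|[set a in X | z \in a]|.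
Proof.
rewrite -(cardsID [set a : {set T} | z \notin a] X); congr (_ + _).
  by apply: eq_card => a; rewrite !inE andbC.
by apply: eq_card => a; rewrite !inE negbK andbC.
Qed.

Lemma agree_split (U : {set T}) z X (b : bool) : z \in U -> agree U X ->
  agree (U :\ z) [set a in X | (z \in a) == b].
Proof.
move=> zU hX a a'; rewrite !inE => /andP[ha /eqP za] /andP[ha' /eqP za'].
have := hX _ _ ha ha' => /setP E; apply/setP=> t; rewrite !inE.
have := E t; rewrite !inE.
by case: (eqVneq t z) => [->|_] /=; rewrite ?za ?za' ?zU.
Qed.

Lemma AD (U : {set T}) (A B : {set {set T}}) : agree U A -> agree U B ->
  #|A| * #|B| <= #|J A B| * #|M A B|.
Proof.
have [k] := ubnP #|U|; elim: k U A B => // k IH U A B ltU hA hB.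
case: (set_0Vmem U) => [U0|[z zU]].
  have cA : #|A| <= 1.
    by apply/card_le1_eqP=> a a' ha ha'; have := hA _ _ ha ha'; rewrite U0 !setD0.
  have cB : #|B| <= 1.
    by apply/card_le1_eqP=> a a' ha ha'; have := hB _ _ ha ha'; rewrite U0 !setD0.
  case: (set_0Vmem A) => [->|[a ha]]; first by rewrite cards0.
  case: (set_0Vmem B) => [->|[b hb]]; first by rewrite cards0 muln0.
  have c1 : 0 < #|J A B| by apply/card_gt0P; exists (a :|: b); apply/imset2P; exists a b.
  have c2 : 0 < #|M A B| by apply/card_gt0P; exists (a :&: b); apply/imset2P; exists a b.
  by apply: leq_trans (leq_mul cA cB) _; rewrite muln1 muln_gt0 c1 c2.
have ltU' : #|U :\ z| < k.
  by move: ltU; rewrite (cardsD1 z U) zU add1n ltnS.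
set A0 := [set a in A | (z \in a) == false].
set A1 := [set a in A | (z \in a) == true].
set B0 := [set a in B | (z \in a) == false].
set B1 := [set a in B | (z \in a) == true].
have eA : #|A| = #|A0| + #|A1|.
  rewrite (card_split A z); congr (_ + _); apply: eq_card => a;
  by rewrite !inE; case: (z \in a).
have eB : #|B| = #|B0| + #|B1|.
  rewrite (card_split B z); congr (_ + _); apply: eq_card => a;
  by rewrite !inE; case: (z \in a).
rewrite (card_split (J A B) z) (card_split (M A B) z) eA eB.
have IHs (X Y : {set {set T}}) (bx by_ : bool) : agree U X -> agree U Y ->
  #|[set a in X | (z \in a) == bx]| * #|[set a in Y | (z \in a) == by_]| <=
  #|J [set a in X | (z \in a) == bx] [set a in Y | (z \in a) == by_]| *
  #|M [set a in X | (z \in a) == bx] [set a in Y | (z \in a) == by_]|.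
  by move=> hX hY; apply: IH ltU' (agree_split (b:=bx) zU hX) (agree_split (b:=by_) zU hY).
apply: four;
  [ apply: leq_trans (IHs A B false false hA hB) _
  | apply: leq_trans (IHs A B false true hA hB) _
  | apply: leq_trans (IHs A B true false hA hB) _
  | apply: leq_trans (IHs A B true true hA hB) _ ];
  apply: leq_mul; apply: subset_leq_card;
  apply/subsetP=> c /imset2P[a b]; rewrite !inE => /andP[ha za] /andP[hb zb] ->;
  rewrite !inE ?(eqP za) ?(eqP zb) /= ?andbT;
  by apply/imset2P; exists a b.
Qed.
End AD.

Lemma prod_lem (T : finType) (X Y : {set {set T}}) :
  #|X| * #|Y| <= #|[set a :\: b | a in X, b in Y]| * #|[set b :\: a | b in Y, a in X]|.
Proof.
set Yc := [set ~: b | b in Y].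
have eY : #|Yc| = #|Y| by rewrite card_imset //; exact: setC_inj.
have ag : forall Z : {set {set T}}, agree setT Z by move=> Z a a' _ _; rewrite !setDT.
have := AD (ag X) (ag Yc); rewrite eY => h; apply: leq_trans h _.
rewrite [X in _ <= X]mulnC; apply: leq_mul.
  rewrite -(card_imset (J X Yc) (@setC_inj T)); apply: subset_leq_card.
  apply/subsetP=> c /imsetP[d /imset2P[a b' ha /imsetP[b hb ->] ->] ->].
  by rewrite setCU setCK setIC -setDE; apply/imset2P; exists b a.
apply: subset_leq_card; apply/subsetP=> c /imset2P[a b' ha /imsetP[b hb ->] ->].
by rewrite -setDE; apply/imset2P; exists a b.
Qed.

Lemma side n (F G : {set {set 'I_n}}) (x y : 'I_n) :
  F \subset G -> down_set G -> intersecting F ->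
  (forall A, A \in F -> (x \in A) || (y \in A)) ->
  #|[set A in F | x \notin A]| <=
    #|[set a :\: b | a in [set A in F | y \notin A], b in [set A in F | x \notin A]]| ->
  #|F| <= degree G x.
Proof.
move=> sFG dG iF cov h.
set D := [set a :\: b | a in _, b in _] in h.
rewrite (card_split F x) addnC.
apply: leq_trans (leq_add (leqnn _) h) _.
have dis : [set a in F | x \in a] :&: D = set0.
  apply/setP=> c; rewrite !inE; apply/negbTE/negP=> /andP[/andP[cF _]].
  case/imset2P=> a b _; rewrite inE => /andP[bF _] ce.
  have := iF _ _ cF bF; rewrite ce.
  have -> : (a :\: b) :&: b = set0.
    by apply/setP=> t; rewrite !inE; case: (t \in b); rewrite /= ?andbF.
  by rewrite eqxx.
rewrite -cardsUI dis cards0 addn0 /degree; apply: subset_leq_card.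
apply/subsetP=> c; rewrite !inE => /orP[/andP[cF xc]|].
  by rewrite (subsetP sFG _ cF) xc.
case/imset2P=> a b; rewrite !inE => /andP[aF ya] /andP[bF xb] ->.
have xa : x \in a by have := cov _ aF; rewrite (negbTE ya) orbF.
rewrite !inE xb xa andbT.
by rewrite andbT; apply: dG (subsetP sFG _ aF) _; apply: subsetDl.
Qed.

Theorem theorem1p7 (n : nat) (F G : {set {set 'I_n}}) :
  F \subset G -> down_set G -> intersecting F -> tau F <= 2 ->
  #|F| <= \max_(x : 'I_n) degree G x.
Proof.
move=> sFG dG iF htau.
have F0 : set0 \notin F.
  by apply/negP=> h; have := iF _ _ h h; rewrite setI0 eqxx.
have : [exists T : {set 'I_n}, covers T F && (#|T| <= 2)].
  apply: contraT => /existsPn hn.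
  suff : 2 < tau F by rewrite ltnNge htau.
  rewrite /tau; apply: (big_ind (fun m => 2 < m)).
  - rewrite ltnNge; apply/negP=> nle; have := hn setT.
    rewrite cardsT card_ord nle andbT => /negP; apply.
    apply/forallP=> A; apply/implyP=> AF; rewrite setTI.
    by apply: contraNneq F0 => <-.
  - by move=> a b ha hb; rewrite leq_min ha hb.
  - by move=> S cS; have := hn S; rewrite cS /= ltnNge.
case/existsP=> T /andP[cT T2].
have cov1 : forall A, A \in F -> T :&: A != set0 by move=> A AF; have := forallP cT A; rewrite AF.
case: (set_0Vmem T) => [T0|[x xT]].
  suff -> : F = set0 by rewrite cards0.
  apply/setP=> A; rewrite inE; apply/negP=> AF; have := cov1 _ AF.
  by rewrite T0 set0I eqxx.
have [y Txy] : exists y, forall t, t \in T -> (t == x) || (t == y).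
  case: (set_0Vmem (T :\ x)) => [Tx0|[y yT]].
    exists x => t tT; case: (eqVneq t x) => //= tx.
    have : t \in T :\ x by rewrite !inE tx.
    by rewrite Tx0 inE.
  have le1 : #|T :\ x| <= 1 by move: T2; rewrite (cardsD1 x T) xT.
  exists y => t tT; case: (eqVneq t x) => //= tx.
  have tT' : t \in T :\ x by rewrite !inE tx.
  by apply/eqP; apply: (card_le1_eqP le1).
have cov : forall A, A \in F -> (x \in A) || (y \in A).
  move=> A AF; have /set0Pn[t] := cov1 _ AF; rewrite inE => /andP[tT tA].
  by case/orP: (Txy _ tT) => /eqP <-; rewrite tA ?orbT.
have cov' : forall A, A \in F -> (y \in A) || (x \in A).
  by move=> A AF; rewrite orbC cov.
have := prod_lem [set A in F | y \notin A] [set A in F | x \notin A].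
case: (leqP #|[set A in F | x \notin A]| #|[set a :\: b | a in [set A in F | y \notin A], b in [set A in F | x \notin A]]|) => h1.
  move=> _; apply: leq_trans (side sFG dG iF cov h1) _; exact: leq_bigmax.
case: (leqP #|[set A in F | y \notin A]| #|[set b :\: a | b in [set A in F | x \notin A], a in [set A in F | y \notin A]]|) => h2.
  move=> _; apply: leq_trans (side sFG dG iF cov' h2) _; exact: leq_bigmax.
by rewrite mulnC leqNgt (ltn_mul h1 h2).
Qed.
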